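(* Let $f(x)=\frac1n\sum_{i=1}^n f_i(x)$ on $\mathbb{R}^d$ with each $f_i$ convex and $L$-smooth, and let $x_0$ satisfy $\|x_0-x^\star\|\le R_0$ for some minimizer $x^\star$ of $f$. Run the following algorithm (Acc-SVRG-G) with $p_k\equiv\frac1n$ and $\tau_k\equiv1-\frac{1}{\sqrt{n+1}}$: set $z_0=\tilde x_0=x_0$, $\alpha_k=\frac{L\tau_k}{1-\tau_k}$, and for $k=0,1,\dots$: $y_k=\tau_kz_k+(1-\tau_k)(\tilde x_k-\frac1L\nabla f(\tilde x_k))$; $z_{k+1}=\arg\min_x\{\langle\mathcal G_k,x\rangle+\frac{\alpha_k}2\|x-z_k\|^2\}$ with $\mathcal G_k=\nabla f_{i_k}(y_k)-\nabla f_{i_k}(\tilde x_k)+\nabla f(\tilde x_k)$ and $i_k$ uniform on $\{1,\dots,n\}$; $\tilde x_{k+1}=y_k$ with probability $p_k$, else $\tilde x_{k+1}=\tilde x_k$. Let $N$ be the first iteration at which $\tilde x_{N+1}=y_N$ is chosen, and terminate at iteration $N$. Then $$\mathbb E\|\nabla f(\tilde x_{N+1})\|^2\le\frac{8L^2R_0^2}{5(\sqrt{n+1}+1)}\quad\text{and}\quad\mathbb E[f(\tilde x_{N+1})]-f(x^\star)\le\frac{LR_0^2}{\sqrt{n+1}+1}.$$ In particular, if $\epsilon_g^2\ge\frac{8L^2R_0^2}{5(\sqrt{n+1}+1)}$ and $\epsilon_f\ge\frac{LR_0^2}{\sqrt{n+1}+1}$, the algorithm achieves these accuracies with an $O(n)$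 expected oracle complexity.
   Context: $L$-smooth means $L$-Lipschitz gradient. Oracle complexity is the expected number of component gradient evaluations $\nabla f_i$; a full gradient costs $n$ evaluations. *)

(* Defs.v *)
From HB Require Import structures.
From mathcomp Require Import all_boot all_order all_algebra.
From mathcomp Require Import all_classical all_reals all_analysis.
Set Implicit Arguments. Unset Strict Implicit. Unset Printing Implicit Defensive.
Import Order.TTheory GRing.Theory Num.Theory.
Import numFieldNormedType.Exports.
Local Open Scope ring_scope.

Section AccSVRG.
Context {R : realType} {d n : nat}.

Definition dotv (u v : 'rV[R]_d) : R := \sum_(j < d) u ord0 j * v ord0 j.
Definition enorm (u : 'rV[R]_d) : R := Num.sqrt (dotv u u).

Definition favg (F : 'I_n -> 'rV[R]_d -> R) (x : 'rV[R]_d) : R :=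
  n%:R^-1 * \sum_(i < n) F i x.
Definition fullgrad (G : 'I_n -> 'rV[R]_d -> 'rV[R]_d) (x : 'rV[R]_d) : 'rV[R]_d :=
  n%:R^-1 *: \sum_(i < n) G i x.

Definition tau_n : R := 1 - (Num.sqrt (n.+1)%:R)^-1.
Definition alpha_n (L : R) : R := L * tau_n / (1 - tau_n).
Definition p_n : R := n%:R^-1.

(* One iteration of Acc-SVRG-G on the state (z_k, xtilde_k), given the
   sampled index i_k and the coin b_k (true = "xtilde_{k+1} := y_k",
   which happens with probability p_k).
   z_{k+1} = argmin_x <G_k,x> + alpha/2 ||x - z_k||^2 = z_k - G_k / alpha. *)
Definition accsvrg_step (L : R) (G : 'I_n -> 'rV[R]_d -> 'rV[R]_d)
    (st : 'rV[R]_d * 'rV[R]_d) (ib : 'I_n * bool) : 'rV[R]_d * 'rV[R]_d :=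
  let z := st.1 in let xt := st.2 in
  let y := tau_n *: z + (1 - tau_n) *: (xt - L^-1 *: fullgrad G xt) in
  let Gk := G ib.1 y - G ib.1 xt + fullgrad G xt in
  (z - (alpha_n L)^-1 *: Gk, if ib.2 then y else xt).

(* On the event {N = m}: coins b_0 = ... = b_{m-1} = false, b_m = true,
   indices i_0, ..., i_m given by s. Returns xtilde_{m+1} = xtilde_{N+1}. *)
Definition final_iterate (L : R) (G : 'I_n -> 'rV[R]_d -> 'rV[R]_d)
    (x0 : 'rV[R]_d) (m : nat) (s : {ffun 'I_m.+1 -> 'I_n}) : 'rV[R]_d :=
  (foldl (accsvrg_step L G) (x0, x0)
     [seq (s j, val j == m) | j <- enum 'I_m.+1]).2.

(* Expectation of h(N, xtilde_{N+1}) for a nonnegative h, over the random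
   run: i_k i.i.d. uniform on 'I_n, coins i.i.d. Bernoulli(p_n) independent
   of the indices, N = first k whose coin is true. Computed as the sum over
   all outcomes {N = m, (i_0..i_m) = s}, each of probability
   p (1-p)^m * (1/n)^(m+1); valued in the extended reals. *)
Definition expect_at_stop (L : R) (G : 'I_n -> 'rV[R]_d -> 'rV[R]_d)
    (x0 : 'rV[R]_d) (h : nat -> 'rV[R]_d -> R) : \bar R :=
  (\sum_(0 <= m <oo)
     ((p_n * (1 - p_n) ^+ m * (n%:R ^+ m.+1)^-1 *
       \sum_(s : {ffun 'I_m.+1 -> 'I_n}) h m (final_iterate L G x0 s))%:E))%E.

End AccSVRG.

Definition convex_fun {R : realType} {d : nat} (f : 'rV[R]_d -> R) : Prop :=
  forall (x y : 'rV[R]_d) (t : R), 0 <= t <= 1 ->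
    f (t *: x + (1 - t) *: y) <= t * f x + (1 - t) * f y.

(* oracle cost of a run terminating at N = m: one full gradient at x_0
   (n component gradients, reused since xtilde_k = x_0 for k <= N) and two
   component gradients per iteration k = 0..m. *)
Definition oracle_cost (n m : nat) : nat := n + 2 * m.+1.

(* Main.v *)
Require Import Defs.
From HB Require Import structures.
From mathcomp Require Import all_boot all_order all_algebra.
From mathcomp Require Import all_classical all_reals all_analysis.
From mathcomp Require Import ring lra.
Import Order.TTheory GRing.Theory Num.Theory.
Import numFieldNormedType.Exports.
Local Open Scope ring_scope.
Local Open Scope classical_set_scope.
Local Open Scope ring_scope.
Section Dot.
Context {R : realType} {d : nat}.
Implicit Types (u v w : 'rV[R]_d).

Lemma dotvC u v : dotv u v = dotv v u.
Proof. by apply: eq_bigr => j _; rewrite mulrC. Qed.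
Lemma dotvDl u v w : dotv (u + v) w = dotv u w + dotv v w.
Proof. by rewrite /dotv -big_split; apply: eq_bigr => j _; rewrite mxE mulrDl. Qed.
Lemma dotvZl (a : R) u w : dotv (a *: u) w = a * dotv u w.
Proof. by rewrite /dotv mulr_sumr; apply: eq_bigr => j _; rewrite mxE mulrA. Qed.
Lemma dotvNl u w : dotv (- u) w = - dotv u w.
Proof. by rewrite -scaleN1r dotvZl mulN1r. Qed.
Lemma dotvBl u v w : dotv (u - v) w = dotv u w - dotv v w.
Proof. by rewrite dotvDl dotvNl. Qed.
Lemma dotvDr u v w : dotv w (u + v) = dotv w u + dotv w v.
Proof. by rewrite dotvC dotvDl !(dotvC w). Qed.
Lemma dotvZr (a : R) u w : dotv w (a *: u) = a * dotv w u.
Proof. by rewrite dotvC dotvZl dotvC. Qed.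
Lemma dotvNr u w : dotv w (- u) = - dotv w u.
Proof. by rewrite dotvC dotvNl dotvC. Qed.
Lemma dotvBr u v w : dotv w (u - v) = dotv w u - dotv w v.
Proof. by rewrite dotvDr dotvNr. Qed.
Lemma dotv0l w : dotv 0 w = 0.
Proof. by rewrite /dotv big1 // => j _; rewrite mxE mul0r. Qed.
Lemma dotv_suml (I : finType) (u : I -> 'rV[R]_d) w :
  dotv (\sum_i u i) w = \sum_i dotv (u i) w.
Proof.
rewrite /dotv exchange_big /=; apply: eq_bigr => j _.
by rewrite summxE mulr_suml.
Qed.
Lemma dotv_ge0 u : 0 <= dotv u u.
Proof. by apply: sumr_ge0 => j _; rewrite -expr2 sqr_ge0. Qed.
Lemma enorm_ge0 u : 0 <= enorm u.
Proof. exact: sqrtr_ge0. Qed.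
Lemma enorm_sq u : enorm u ^+ 2 = dotv u u.
Proof. by rewrite sqr_sqrtr // dotv_ge0. Qed.
Lemma dotv_eq0 u : dotv u u = 0 -> u = 0.
Proof.
move=> /eqP; rewrite psumr_eq0; last by move=> j _; rewrite -expr2 sqr_ge0.
move=> /allP H; apply/rowP => j; rewrite mxE.
by have := H j (mem_index_enum j); rewrite /= -expr2 sqrf_eq0 => /eqP.
Qed.
Lemma line_derive (f : 'rV[R]_d -> R) (x v : 'rV[R]_d) (t : R) : differentiable f (t *: v + x) ->
  is_derive t 1 (fun s : R => f (s *: v + x)) ('d f (t *: v + x) v).
Proof.
move=> df.
have E : (fun h : R => h^-1 *: (((fun s : R => f (s *: v + x)) \o shift t) (h *: 1) - f (t *: v + x)))
   = (fun h => h^-1 *: ((f \o shift (t *: v + x)) (h *: v) - f (t *: v + x))).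
  apply/funext => h /=; congr (_ *: (f _ - _)).
  by rewrite /shift /= [h *: 1]mulr1 scalerDl addrA.
apply: DeriveDef.
  by rewrite /derivable E; exact: diff_derivable.
by rewrite /derive E -deriveE.
Qed.


Lemma descent_phi (f1 : R -> R) (c1 c2 : R) (D : R -> R) :
  (forall t : R, is_derive t (1:R) f1 (D t)) ->
  (forall t, 0 < t < 1 -> D t - c1 - 2 * t * c2 <= 0) ->
  f1 1 - c1 - c2 <= f1 0.
Proof.
move=> dD hD.
pose phi := f1 - (c1 *: (@idfun R) + c2 *: ((@idfun R) * (@idfun R))).
have dphi : forall t : R, is_derive t (1:R) phi (D t - (c1 *: 1 + c2 *: (t *: 1 + t *: 1))).
  move=> t; apply: is_derive_eq.
  by rewrite /=; congr (_ - (_ + _ *: _)); rewrite addrC.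
have := @ler0_derive1_nincr R phi 0 1.
have H1 : forall x, x \in `]0, 1[%R -> derivable phi x 1.
  by move=> t _; have [] := dphi t.
move=> /(_ H1) H.
have H2 : forall x, x \in `]0, 1[%R -> (phi^`())%classic x <= 0.
  move=> t; rewrite in_itv /= => /andP [t0 t1].
  rewrite derive1E (@derive_val _ _ _ _ _ _ _ (dphi t)).
  rewrite /GRing.scale /= !mulr1.
  have := hD t; rewrite t0 t1 => /(_ isT); lra.
have H3 : {within `[0, 1], continuous phi}.
  apply: derivable_within_continuous => t _; by have [] := dphi t.
have := H H2 H3 0 1 (lexx 0) ler01 (lexx 1).
change (f1 1 - (c1 * 1 + c2 * (1 * 1)) <= f1 0 - (c1 * 0 + c2 * (0 * 0)) -> f1 1 - c1 - c2 <= f1 0); lra.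
Qed.

Lemma dotv_expand u c v : dotv (u - c *: v) (u - c *: v) =
  dotv u u - 2 * c * dotv u v + c ^+ 2 * dotv v v.
Proof.
rewrite !dotvBl !dotvBr !dotvZl !dotvZr (dotvC v u); ring.
Qed.

Lemma cs_bound a v (c : R) : 0 < c -> dotv a a <= c ^+ 2 * dotv v v ->
  dotv a v <= c * dotv v v.
Proof.
move=> c0 H.
have := dotv_ge0 (a - c *: v); rewrite dotv_expand => H2.
have : 2 * c * dotv a v <= 2 * c * (c * dotv v v) by lra.
by rewrite ler_pM2l ?mulr_gt0.
Qed.

Lemma descent (f : 'rV[R]_d -> R) g (L : R) x u : 0 < L ->
  (forall y, differentiable f y) -> (forall y v, 'd f y v = dotv (g y) v) ->
  (forall a b, enorm (g a - g b) <= L * enorm (a - b)) ->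
  f u <= f x + dotv (g x) (u - x) + L / 2 * dotv (u - x) (u - x).
Proof.
move=> L0 df dg gL.
set v := u - x.
have := @descent_phi (fun s => f (s *: v + x)) (dotv (g x) v) (L / 2 * dotv v v)
  (fun t => 'd f (t *: v + x) v).
move=> /(_ (fun t => @line_derive f x v t (df _))).
rewrite scale1r scale0r add0r /v subrK.
have hD : forall t : R, 0 < t < 1 -> 'd f (t *: (u - x) + x) (u - x) - dotv (g x) (u - x) -
   2 * t * (L / 2 * dotv (u - x) (u - x)) <= 0.
  move=> t /andP [t0 t1].
  rewrite dg -dotvBl.
  have Lt : 0 < L * t by rewrite mulr_gt0.
  have := @cs_bound (g (t *: (u - x) + x) - g x) (u - x) (L * t) Lt.
  have Hn := gL (t *: (u - x) + x) x.
  rewrite addrK in Hn.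
  have : dotv (g (t *: (u - x) + x) - g x) (g (t *: (u - x) + x) - g x) <=
     (L * t) ^+ 2 * dotv (u - x) (u - x).
    rewrite -enorm_sq.
    have -> : (L * t) ^+ 2 * dotv (u - x) (u - x) = (L * enorm (t *: (u - x))) ^+ 2.
      by rewrite [RHS]exprMn enorm_sq dotvZl dotvZr; ring.
    apply: lerXn2r; rewrite ?nnegrE ?enorm_ge0 ?mulr_ge0 ?enorm_ge0 ?(ltW L0) //.
  move=> H1 /(_ H1).
  move=> H2; rewrite -subr_le0 in H2.
  have -> : dotv (g (t *: (u - x) + x) - g x) (u - x) -
      2 * t * (L / 2 * dotv (u - x) (u - x)) =
      dotv (g (t *: (u - x) + x) - g x) (u - x) - L * t * dotv (u - x) (u - x).
    by field.
  exact: H2.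
move=> /(_ hD); lra.
Qed.
Lemma step_alg (z xs x0 gt gy y w : 'rV[R]_d) (L tau th al fy fx0 fs S1 : R) :
 0 < L -> 0 < tau -> 0 < th -> tau + th = 1 -> al = L * tau / th ->
 w = x0 - L^-1 *: gt -> y = tau *: z + th *: w ->
 fy + dotv gy (x0 - y) + S1 / (2 * L) <= fx0 ->
 fy + dotv gy (xs - y) <= fs ->
 tau^-1 * (fy - fs) <= al / 2 * dotv (z - xs) (z - xs)
   - (al / 2 * dotv (z - xs) (z - xs) - dotv gy (z - xs) +
      (2 * al)^-1 * (S1 + 2 * dotv (gy - gt) gt + dotv gt gt))
   + th / tau * (fx0 - fs) - dotv gt gt / (2 * al).
Proof.
move=> L0 t0 th0 tth -> -> -> H1 H2.
set s1 := fx0 - (fy + dotv gy (x0 - (tau *: z + th *: (x0 - L^-1 *: gt))) + S1 / (2 * L)).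
set s2 := fs - (fy + dotv gy (xs - (tau *: z + th *: (x0 - L^-1 *: gt)))).
have s10 : 0 <= s1 by rewrite subr_ge0.
have s20 : 0 <= s2 by rewrite subr_ge0.
rewrite -subr_ge0.
set K := tau^-1 * (th * s1 + tau * s2).
set A := (X in 0 <= X).
have -> : A = K + (A - K) by ring.
apply: addr_ge0; first by apply: mulr_ge0; [rewrite invr_ge0 ltW | apply: addr_ge0; apply: mulr_ge0 => //; apply: ltW].
rewrite /A /K /s1 /s2 !(dotvBr, dotvDr, dotvZr, dotvBl, dotvNr).
have Lz : L != 0 by rewrite gt_eqF.
have tz : tau != 0 by rewrite gt_eqF.
have thz : th != 0 by rewrite gt_eqF.
have -> : th = 1 - tau by lra.
have t1 : 1 - tau != 0 by rewrite subr_eq0 eq_sym; apply/eqP; lra.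
rewrite le_eqVlt; apply/orP; left; apply/eqP.
by field; rewrite Lz tz t1.
Qed.
Lemma cocoercive (f : 'rV[R]_d -> R) g (L : R) : 0 < L ->
  (forall x u, f x + dotv (g x) (u - x) <= f u) ->
  (forall x u, f u <= f x + dotv (g x) (u - x) + L / 2 * dotv (u - x) (u - x)) ->
  forall x u, f x + dotv (g x) (u - x) + dotv (g u - g x) (g u - g x) / (2 * L) <= f u.
Proof.
move=> L0 HA HB x u.
set dl := g u - g x.
have HA1 := HA x (u - L^-1 *: dl).
have HB1 := HB u (u - L^-1 *: dl).
have e1 : u - L^-1 *: dl - x = (u - x) - L^-1 *: dl by apply/rowP => j; rewrite !mxE; ring.
have e2 : u - L^-1 *: dl - u = - (L^-1 *: dl) by apply/rowP => j; rewrite !mxE; ring.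
rewrite e1 dotvBr dotvZr in HA1.
rewrite e2 dotvNr dotvNl dotvNr opprK !dotvZr !dotvZl in HB1.
have e3 : dotv dl dl = dotv (g u) dl - dotv (g x) dl by rewrite {1}/dl dotvBl.
set F := f (u - L^-1 *: dl) in HA1 HB1.
have Lz : L != 0 by rewrite gt_eqF.
have : dotv dl dl / (2 * L) = L^-1 * dotv (g u) dl - L^-1 * dotv (g x) dl - L / 2 * (L^-1 * (L^-1 * dotv dl dl)).
  rewrite e3; field; by rewrite Lz.
lra.
Qed.

End Dot.

Section A.
Context {R : realType} {d : nat}.
Implicit Types (f : 'rV[R]_d -> R) (g : 'rV[R]_d -> 'rV[R]_d).

Lemma grad_ineq f g x u : differentiable f x -> 'd f x (u - x) = dotv (g x) (u - x) ->
  convex_fun f -> f x + dotv (g x) (u - x) <= f u.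
Proof.
move=> df dg cf; rewrite -dg -deriveE //.
rewrite addrC -lerBrDr.
apply: limr_le; first exact: diff_derivable.
near=> h.
have h0 : h != 0 by near: h; exact: nbhs_dnbhs_neq.
have h1 : `|h| < 1 by near: h; exact: dnbhs0_lt.
rewrite /= /shift.
have [hp|hn] := ltP 0 h.
- have := cf u x h; rewrite ltW //= ltW; last by rewrite (le_lt_trans (ler_norm h)).
  move=> /(_ isT).
  have -> : h *: u + (1 - h) *: x = h *: (u - x) + x.
    by apply/rowP => j; rewrite !mxE; ring.
  move=> H.
  have -> : forall a : R, h^-1 *: a = h^-1 * a by [].
  rewrite ler_pdivrMl //; nra.
- have hn' : h < 0 by rewrite lt_neqAle h0 hn.
  have h1p : 0 < 1 - h by lra.
  have Ht : 0 <= (1 - h)^-1 <= 1.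
    by rewrite invr_ge0 ltW //= invf_le1 //; lra.
  have := cf (h *: (u - x) + x) u (1 - h)^-1 Ht.
  have -> : (1 - h)^-1 *: (h *: (u - x) + x) + (1 - (1 - h)^-1) *: u = x.
    apply/rowP => j; rewrite !mxE; field; lra.
  set F := f (h *: (u - x) + x).
  move=> H.
  have H2 : (1 - h) * f x <= F - h * f u.
    have := ler_wpM2l (ltW h1p) H.
    rewrite mulrDr mulrA mulfV ?gt_eqF // mul1r mulrA mulrBr mulr1 mulfV ?gt_eqF //.
    by move=> H3; lra.
  have -> : forall a : R, h^-1 *: a = h^-1 * a by [].
  set k := h^-1.
  have kh : k * h = 1 by rewrite mulVf.
  have k0 : k < 0 by rewrite invr_lt0.
  have -> : k * (F - f x) = k * (F - f x - h * (f u - f x)) + (f u - f x).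
    by rewrite -[X in _ = _ + X]mul1r -kh; ring.
  rewrite gerDr; apply: mulr_le0_ge0; [exact: ltW | lra].
Unshelve. all: by end_near.
Qed.
End A.

Section Comb.
Context {R : realType} {d n : nat}.
Variables (L : R) (G : 'I_n -> 'rV[R]_d -> 'rV[R]_d) (x0 : 'rV[R]_d).

Definition wv : 'rV[R]_d := x0 - L^-1 *: fullgrad G x0.
Definition yof (z : 'rV[R]_d) : 'rV[R]_d := @tau_n R n *: z + (1 - @tau_n R n) *: wv.
Definition zstep (z : 'rV[R]_d) (i : 'I_n) : 'rV[R]_d :=
  z - (@alpha_n R n L)^-1 *: (G i (yof z) - G i x0 + fullgrad G x0).

Definition fin_from (z : 'rV[R]_d) (m : nat) (s : {ffun 'I_m.+1 -> 'I_n}) :=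
  (foldl (accsvrg_step L G) (z, x0)
     [seq (s j, val j == m) | j <- enum 'I_m.+1]).2.
Arguments fin_from z {m} s.

Fixpoint Ex (m : nat) (h : 'rV[R]_d -> R) (z : 'rV[R]_d) : R :=
  if m is m'.+1 then n%:R^-1 * \sum_(i < n) Ex m' h (zstep z i) else h (yof z).

Lemma fin_from0 z (s : {ffun 'I_1 -> 'I_n}) : fin_from z s = yof z.
Proof. by rewrite /fin_from enum_ordSl /= enum_ord0 /=. Qed.

Lemma fin_fromS z m (s : {ffun 'I_m.+2 -> 'I_n}) :
  fin_from z s = fin_from (zstep z (s ord0)) [ffun j => s (lift ord0 j)].
Proof.
rewrite /fin_from enum_ordSl /= -map_comp.
congr (foldl _ _ _).2.
apply: eq_map => j /=; by rewrite ffunE.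
Qed.

Lemma split_ffun m (H : {ffun 'I_m.+2 -> 'I_n} -> R) :
  \sum_(s : {ffun 'I_m.+2 -> 'I_n}) H s =
  \sum_(i < n) \sum_(t : {ffun 'I_m.+1 -> 'I_n})
     H [ffun j => if unlift ord0 j is Some j' then t j' else i].
Proof.
rewrite pair_big /=.
pose phi := fun p : 'I_n * {ffun 'I_m.+1 -> 'I_n} =>
  [ffun j => if unlift ord0 j is Some j' then p.2 j' else p.1].
pose psi := fun s : {ffun 'I_m.+2 -> 'I_n} => (s ord0, [ffun j => s (lift ord0 j)]).
rewrite (reindex phi) //=.
exists psi => [[i t] _ | s _].
  rewrite /psi /phi /= ffunE unlift_none; congr (_, _).
  by apply/ffunP => j; rewrite !ffunE liftK.
apply/ffunP => j; rewrite /phi /psi ffunE /=.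
by case: unliftP => [j' ->|->]; rewrite ?ffunE.
Qed.

Lemma link (n0 : (0 < n)%N) m h z :
  \sum_(s : {ffun 'I_m.+1 -> 'I_n}) h (fin_from z s) = n%:R ^+ m.+1 * Ex m h z.
Proof.
elim: m z => [|m IH] z.
  under eq_bigr do rewrite fin_from0.
  by rewrite sumr_const card_ffun !card_ord expn1 expr1 mulr_natl.
rewrite split_ffun.
under eq_bigr => i _.
  under eq_bigr => t _.
    rewrite fin_fromS ffunE unlift_none.
    have -> : [ffun j => [ffun j0 => if unlift ord0 j0 is Some j' then t j' else i] (lift ord0 j)] = t.
      by apply/ffunP => j; rewrite !ffunE liftK.
    over.
  rewrite IH; over.
rewrite /= -mulr_sumr mulrA [n%:R ^+ m.+2]exprS.
have nz : n%:R != 0 :> R by rewrite pnatr_eq0 -lt0n.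
by rewrite [n%:R * _ * _]mulrC mulrA mulVf // mul1r.
Qed.
End Comb.
Section Num.
Context {R : realType}.
Definition Bnum (s L R0 : R) := (s ^+ 2 - 1)^-1 * (L * (1 - s^-1) / s^-1 / 2 * R0 ^+ 2)
   + s^-1 / (1 - s^-1) * (L * R0 ^+ 2 / 4).

Lemma Bnum_eq s L R0 : 1 < s ->
  (1 - s^-1) * Bnum s L R0 = L * R0 ^+ 2 * (3 * s - 1) / (4 * s * (s + 1)).
Proof.
move=> s1.
have s0 : s != 0 by rewrite gt_eqF // (lt_trans ltr01 s1).
have s1' : s - 1 != 0 by rewrite subr_eq0 gt_eqF.
have s2 : s + 1 != 0 by rewrite gt_eqF // ltr_wpDl // ltW // (lt_trans ltr01 s1).
have e1 : 1 - s^-1 = (s - 1) / s by field.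
have e2 : s ^+ 2 - 1 = (s - 1) * (s + 1) by ring.
rewrite /Bnum e1 e2; field.
by rewrite s0 s1' s2.
Qed.

Lemma num_f s L R0 : 1 < s -> 0 <= L ->
  (1 - s^-1) * Bnum s L R0 <= L * R0 ^+ 2 / (s + 1).
Proof.
move=> s1 L0; rewrite Bnum_eq //.
have s0 : 0 < s by exact: (lt_trans ltr01 s1).
rewrite -subr_ge0.
have -> : L * R0 ^+ 2 / (s + 1) - L * R0 ^+ 2 * (3 * s - 1) / (4 * s * (s + 1)) =
   L * R0 ^+ 2 / (4 * s).
  field; rewrite gt_eqF // gt_eqF //; lra.
by apply: divr_ge0; [apply: mulr_ge0 => //; exact: sqr_ge0 | lra].
Qed.

Lemma num_g s L R0 : 1 < s -> 0 <= L ->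
  2 * L * ((1 - s^-1) * Bnum s L R0) <= 8 * L ^+ 2 * R0 ^+ 2 / (5 * (s + 1)).
Proof.
move=> s1 L0; rewrite Bnum_eq //.
have s0 : 0 < s by exact: (lt_trans ltr01 s1).
rewrite -subr_ge0.
have -> : 8 * L ^+ 2 * R0 ^+ 2 / (5 * (s + 1)) - 2 * L * (L * R0 ^+ 2 * (3 * s - 1) / (4 * s * (s + 1))) =
   L ^+ 2 * R0 ^+ 2 * (s + 5) / (10 * s * (s + 1)).
  by field; rewrite gt_eqF // ?gt_eqF //; lra.
apply: divr_ge0; first by apply: mulr_ge0; [apply: mulr_ge0; exact: sqr_ge0 | lra].
apply: mulr_ge0; [apply: mulr_ge0|]; lra.
Qed.
End Num.


Section Main.
Variables (R : realType) (d n : nat) (L R0 : R)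
    (F : 'I_n -> 'rV[R]_d -> R) (G : 'I_n -> 'rV[R]_d -> 'rV[R]_d)
    (x0 xs : 'rV[R]_d).
Hypotheses (n0 : (0 < n)%N) (L0 : 0 < L)
  (dF : forall i x, differentiable (F i) x)
  (dG : forall i x v, 'd (F i) x v = dotv (G i x) v)
  (cF : forall i, convex_fun (F i))
  (lG : forall i x y, enorm (G i x - G i y) <= L * enorm (x - y))
  (mF : forall x, favg F xs <= favg F x)
  (hR : enorm (x0 - xs) <= R0).

Let f := favg F.
Let gf := fullgrad G.

Lemma nz : n%:R != 0 :> R.
Proof. by rewrite pnatr_eq0 -lt0n. Qed.

Lemma avg_le (a b : 'I_n -> R) : (forall i, a i <= b i) ->
  n%:R^-1 * \sum_i a i <= n%:R^-1 * \sum_i b i.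
Proof. by move=> H; rewrite ler_wpM2l ?invr_ge0 ?ler0n // ler_sum. Qed.

Lemma avg_const (c : R) : n%:R^-1 * \sum_(i < n) c = c.
Proof. by rewrite sumr_const card_ord -[c *+ n]mulr_natl mulrA mulVf ?nz ?mul1r. Qed.

Lemma avg_dot (u : 'I_n -> 'rV[R]_d) e :
  n%:R^-1 * \sum_i dotv (u i) e = dotv (n%:R^-1 *: \sum_i u i) e.
Proof. by rewrite dotvZl dotv_suml. Qed.

Lemma Ai i x u : F i x + dotv (G i x) (u - x) <= F i u.
Proof. by apply: grad_ineq => //; rewrite dG. Qed.

Lemma Bi i x u : F i u <= F i x + dotv (G i x) (u - x) + L / 2 * dotv (u - x) (u - x).
Proof. by apply: descent; [exact: L0 | exact: dF | exact: dG | exact: lG]. Qed.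

Lemma Ci i x u : F i x + dotv (G i x) (u - x) +
   dotv (G i u - G i x) (G i u - G i x) / (2 * L) <= F i u.
Proof. by apply: cocoercive; [exact: L0 | exact: Ai | exact: Bi]. Qed.

Lemma favg_lin (a : R) x u :
  f x + dotv (gf x) (u - x) + a = n%:R^-1 * \sum_i (F i x + dotv (G i x) (u - x) + a).
Proof.
rewrite !big_split /= !mulrDr avg_const avg_dot.
by [].
Qed.

Lemma Af x u : f x + dotv (gf x) (u - x) <= f u.
Proof.
rewrite -[_ + _]addr0 favg_lin /f /favg; apply: avg_le => i; rewrite addr0; exact: Ai.
Qed.

Lemma Bf x u : f u <= f x + dotv (gf x) (u - x) + L / 2 * dotv (u - x) (u - x).
Proof. rewrite favg_lin /f /favg; apply: avg_le => i; exact: Bi. Qed.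

Lemma Cf x u : f x + dotv (gf x) (u - x) +
   dotv (gf u - gf x) (gf u - gf x) / (2 * L) <= f u.
Proof. by apply: cocoercive; [exact: L0 | exact: Af | exact: Bf]. Qed.


Lemma Lz : L != 0. Proof. by rewrite gt_eqF. Qed.

Lemma dstep x : f (x - L^-1 *: gf x) <= f x - dotv (gf x) (gf x) / (2 * L).
Proof.
have := Bf x (x - L^-1 *: gf x).
move: (gf x) => q.
have -> : x - L^-1 *: q - x = - (L^-1 *: q) by apply/rowP => j; rewrite !mxE; ring.
rewrite dotvNr dotvNl dotvNr opprK !dotvZr !dotvZl.
have -> : L / 2 * (L^-1 * (L^-1 * dotv q q)) = L^-1 * dotv q q - dotv q q / (2 * L).
  by field; rewrite Lz.
lra.
Qed.

Lemma grad_bound y : dotv (gf y) (gf y) <= 2 * L * (f y - f xs).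
Proof.
have := dstep y; have := mF (y - L^-1 *: gf y); rewrite -/f => H1 H2.
have : dotv (gf y) (gf y) / (2 * L) <= f y - f xs by lra.
by rewrite ler_pdivrMr ?mulr_gt0 // mulrC.
Qed.

Lemma gfs0 : gf xs = 0.
Proof.
apply: dotv_eq0; apply/eqP; rewrite eq_le dotv_ge0 andbT.
by have := grad_bound xs; rewrite subrr mulr0.
Qed.


Lemma avgD (a b : 'I_n -> R) :
  n%:R^-1 * \sum_i (a i + b i) = n%:R^-1 * \sum_i a i + n%:R^-1 * \sum_i b i.
Proof. by rewrite big_split mulrDr. Qed.
Lemma avgN (a : 'I_n -> R) : n%:R^-1 * \sum_i (- a i) = - (n%:R^-1 * \sum_i a i).
Proof. by rewrite sumrN mulrN. Qed.
Lemma avgZ (k : R) (a : 'I_n -> R) : n%:R^-1 * \sum_i (k * a i) = k * (n%:R^-1 * \sum_i a i).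
Proof. by rewrite -mulr_sumr mulrCA. Qed.

Lemma vavg y : n%:R^-1 *: \sum_i (G i y - G i x0 + gf x0) = gf y.
Proof.
rewrite big_split sumrB sumr_const card_ord scalerDr scalerBr.
by rewrite -[gf x0 *+ n]scaler_nat scalerA mulVf ?nz // scale1r subrK.
Qed.

Lemma vavg2 y : n%:R^-1 *: \sum_i (G i y - G i x0) = gf y - gf x0.
Proof. by rewrite sumrB scalerBr. Qed.

Let tau := @tau_n R n.
Let th := 1 - tau.
Let al := @alpha_n R n L.
Let sq : R := Num.sqrt (n.+1)%:R.

Lemma sq_gt1 : 1 < sq.
Proof. by rewrite -sqrtr1 ltr_sqrt ?ltr0n // ltr1n ltnS. Qed.

Lemma th_eq : th = sq^-1.
Proof. by rewrite /th /tau /tau_n opprB addrC subrK. Qed.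

Lemma th_gt0 : 0 < th.
Proof. by rewrite th_eq invr_gt0 (lt_trans ltr01 sq_gt1). Qed.

Lemma tau_gt0 : 0 < tau.
Proof.
rewrite /tau /tau_n subr_gt0 invf_lt1 ?sq_gt1 //; exact: (lt_trans ltr01 sq_gt1).
Qed.

Lemma al_eq : al = L * tau / th.
Proof. by []. Qed.

Lemma al_gt0 : 0 < al.
Proof. by rewrite al_eq divr_gt0 ?mulr_gt0 ?tau_gt0 ?th_gt0. Qed.

Definition V (z : 'rV[R]_d) := al / 2 * dotv (z - xs) (z - xs).
Definition AV z := n%:R^-1 * \sum_i V (zstep L G x0 z i).
Definition Psi z := tau^-1 * (f (yof L G x0 z) - f xs).
Definition Cc := th / tau * (f x0 - f xs) - dotv (gf x0) (gf x0) / (2 * al).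

Lemma V_ge0 z : 0 <= V z.
Proof. by rewrite /V mulr_ge0 ?dotv_ge0 // divr_ge0 ?ltW ?al_gt0. Qed.

Lemma AV_ge0 z : 0 <= AV z.
Proof. by rewrite /AV mulr_ge0 ?invr_ge0 ?ler0n // sumr_ge0 // => i _; exact: V_ge0. Qed.

Definition S1 y := n%:R^-1 * \sum_i dotv (G i x0 - G i y) (G i x0 - G i y).

Lemma V_step z i : V (zstep L G x0 z i) =
  al / 2 * dotv (z - xs) (z - xs)
  - dotv (G i (yof L G x0 z) - G i x0 + gf x0) (z - xs)
  + (2 * al)^-1 * (dotv (G i x0 - G i (yof L G x0 z)) (G i x0 - G i (yof L G x0 z))
        + 2 * dotv (G i (yof L G x0 z) - G i x0) (gf x0) + dotv (gf x0) (gf x0)).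
Proof.
rewrite /V /zstep -/al.
change (fullgrad G x0) with (gf x0).
move: (G i (yof L G x0 z)) (G i x0) (gf x0) => a b c.
have -> : z - al^-1 *: (a - b + c) - xs = (z - xs) - al^-1 *: (a - b + c).
  by apply/rowP => j; rewrite !mxE; ring.
rewrite dotv_expand.
have -> : dotv (b - a) (b - a) = dotv (a - b) (a - b).
  by rewrite -opprB dotvNl dotvNr opprK.
rewrite (dotvC (z - xs)).
move: (a - b) => e.
rewrite !(dotvDl, dotvDr) (dotvC c e).
have alz : al != 0 by rewrite gt_eqF ?al_gt0.
by field.
Qed.

Lemma AV_eq z : AV z = al / 2 * dotv (z - xs) (z - xs)
   - dotv (gf (yof L G x0 z)) (z - xs)
   + (2 * al)^-1 * (S1 (yof L G x0 z) + 2 * dotv (gf (yof L G x0 z) - gf x0) (gf x0)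
        + dotv (gf x0) (gf x0)).
Proof.
rewrite /AV.
under eq_bigr do rewrite V_step.
rewrite !(avgD, avgN, avgZ) !avg_const !avg_dot vavg vavg2 /S1.
by [].
Qed.

Lemma H1avg y : f y + dotv (gf y) (x0 - y) + S1 y / (2 * L) <= f x0.
Proof.
have -> : f y + dotv (gf y) (x0 - y) + S1 y / (2 * L) =
  n%:R^-1 * \sum_i (F i y + dotv (G i y) (x0 - y) +
     dotv (G i x0 - G i y) (G i x0 - G i y) / (2 * L)).
  rewrite !avgD avg_dot; congr (_ + _).
  by rewrite /S1 -mulrA mulr_suml.
apply: avg_le => i; exact: Ci.
Qed.

Lemma per_step z : Psi z <= V z - AV z + Cc.
Proof.
rewrite AV_eq /V /Psi /Cc.
have := @step_alg R d z xs x0 (gf x0) (gf (yof L G x0 z)) (yof L G x0 z) (wv L G x0)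
  L tau th al (f (yof L G x0 z)) (f x0) (f xs) (S1 (yof L G x0 z)) L0 tau_gt0 th_gt0.
rewrite /th addrC subrK => /(_ erefl erefl erefl erefl).
move=> /(_ (H1avg _) (Af _ _)).
by rewrite addrA.
Qed.

Definition Cp := th / tau * (L * R0 ^+ 2 / 4).

Lemma Cc_le : Cc <= Cp.
Proof.
have R00 : 0 <= R0 by apply: le_trans hR; exact: enorm_ge0.
have hE : dotv (x0 - xs) (x0 - xs) <= R0 ^+ 2.
  by rewrite -enorm_sq lerXn2r ?nnegrE ?enorm_ge0.
have h1 := Cf x0 xs.
rewrite gfs0 sub0r dotvNl dotvNr opprK in h1.
rewrite -[xs - x0]opprB dotvNr in h1.
have h2 := dotv_ge0 (gf x0 - (L / 2) *: (x0 - xs)).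
rewrite dotv_expand in h2.
move: h1 h2; set P := dotv (gf x0) (x0 - xs); set Q := dotv (gf x0) (gf x0);
  set E := dotv (x0 - xs) (x0 - xs) => h1 h2.
have Q0 : 0 <= Q by exact: dotv_ge0.
have key : f x0 - f xs - Q / (2 * L) <= L * R0 ^+ 2 / 4.
  have h3 : L * P <= Q + L ^+ 2 / 4 * E by lra.
  have h4 : L * P <= Q + L ^+ 2 / 4 * R0 ^+ 2.
    apply: (le_trans h3); rewrite lerD2l ler_wpM2l // divr_ge0 ?sqr_ge0 //.
  have h5 : P <= Q / L + L / 4 * R0 ^+ 2.
    rewrite -(ler_pM2l L0) mulrDr mulrCA divff ?Lz // mulr1.
    by apply: (le_trans h4); rewrite lerD2l le_eqVlt; apply/orP; left; apply/eqP; rewrite expr2; ring.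
  have h6 : Q / (2 * L) = Q / L / 2 by rewrite invfM mulrA mulrAC.
  lra.
rewrite /Cc /Cp al_eq.
have k0 : 0 < th / tau by rewrite divr_gt0 ?th_gt0 ?tau_gt0.
have -> : Q / (2 * (L * tau / th)) = th / tau * (Q / (2 * L)).
  field; rewrite Lz /= gt_eqF ?tau_gt0 // gt_eqF ?th_gt0 //.
rewrite -mulrBr ler_pM2l //.
Qed.

Let p : R := @p_n R n.
Let q : R := 1 - p.

Lemma p_ge0 : 0 <= p.
Proof. by rewrite /p /p_n invr_ge0 ler0n. Qed.

Lemma q_ge0 : 0 <= q.
Proof.
rewrite /q /p /p_n subr_ge0 invf_le1 ?ltr0n // ler1n //.
Qed.

Lemma avg_aff (a : 'I_n -> R) (k pp c : R) :
  n%:R^-1 * \sum_i (k * (pp * a i + c)) = k * (pp * (n%:R^-1 * \sum_i a i) + c).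
Proof. by rewrite avgZ avgD avgZ avg_const. Qed.

Lemma main_ind (h : 'rV[R]_d -> R) (k : R) : 0 <= k ->
  (forall z, h (yof L G x0 z) <= k * Psi z) ->
  forall M z, \sum_(0 <= m < M) p * q ^+ m * Ex L G x0 m h z <=
     k * (p * V z + Cp * (1 - q ^+ M)).
Proof.
move=> k0 hk; elim=> [|M IH] z.
  by rewrite big_nil expr0 subrr mulr0 addr0 mulr_ge0 // mulr_ge0 ?p_ge0 ?V_ge0.
rewrite big_nat_recl //= expr0 mulr1.
have -> : \sum_(0 <= i < M) p * q ^+ i.+1 *
    (n%:R^-1 * \sum_(j < n) Ex L G x0 i h (zstep L G x0 z j)) =
  q * (n%:R^-1 * \sum_(j < n) \sum_(0 <= i < M) p * q ^+ i * Ex L G x0 i h (zstep L G x0 z j)).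
  rewrite exchange_big /= !mulr_sumr; apply: eq_bigr => i _.
  rewrite !mulr_sumr; apply: eq_bigr => j _.
  by rewrite exprS; ring.
have e2 : q * (n%:R^-1 * \sum_(j < n) \sum_(0 <= i < M) p * q ^+ i * Ex L G x0 i h (zstep L G x0 z j))
   <= q * (k * (p * AV z + Cp * (1 - q ^+ M))).
  apply: ler_wpM2l; first exact: q_ge0.
  apply: le_trans; first by apply: avg_le => j; exact: IH.
  have := avg_aff (fun j => V (zstep L G x0 z j)) k p (Cp * (1 - q ^+ M)).
  by rewrite /= => ->.
have e1 : p * h (yof L G x0 z) <= p * (k * (V z - AV z + Cp)).
  apply: ler_wpM2l; first exact: p_ge0.
  apply: (le_trans (hk z)); apply: ler_wpM2l => //.
  apply: (le_trans (per_step z)); rewrite lerD2l; exact: Cc_le.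
have e3 : 0 <= k * (p * (p * AV z)).
  apply: mulr_ge0 => //; apply: mulr_ge0; first exact: p_ge0.
  apply: mulr_ge0; [exact: p_ge0|exact: AV_ge0].
rewrite exprS.
move: e1 e2 e3; rewrite /q.
set S := n%:R^-1 * _.
move: (V z) (AV z) (h (yof L G x0 z)) Cp (p) ((1 - p) ^+ M) S => a b c e pp r SS.
move=> e1 e2 e3; nra.
Qed.

Lemma Ex_ge0 (H : 'rV[R]_d -> R) m z : (forall x, 0 <= H x) -> 0 <= Ex L G x0 m H z.
Proof.
move=> H0; elim: m z => [|m IH] z //=.
by rewrite mulr_ge0 ?invr_ge0 ?ler0n // sumr_ge0.
Qed.

Lemma term_eq (H : 'rV[R]_d -> R) m :
  p * q ^+ m * (n%:R ^+ m.+1)^-1 *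
    \sum_(s : {ffun 'I_m.+1 -> 'I_n}) H (final_iterate L G x0 s) =
  p * q ^+ m * Ex L G x0 m H x0.
Proof.
have -> : \sum_(s : {ffun 'I_m.+1 -> 'I_n}) H (final_iterate L G x0 s) =
   \sum_(s : {ffun 'I_m.+1 -> 'I_n}) H (fin_from L G x0 x0 m s) by [].
have nz2 : n%:R ^+ m.+1 != 0 :> R by rewrite expf_neq0 // nz.
rewrite link //; by field.
Qed.

Lemma Vx0 : V x0 <= al / 2 * R0 ^+ 2.
Proof.
have R00 : 0 <= R0 by apply: le_trans hR; exact: enorm_ge0.
rewrite /V; apply: ler_wpM2l; first by apply: divr_ge0; [exact: ltW al_gt0|].
by rewrite -enorm_sq lerXn2r ?nnegrE ?enorm_ge0.
Qed.

Lemma Cp_ge0 : 0 <= Cp.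
Proof.
apply: mulr_ge0; first by apply: divr_ge0; apply: ltW; [exact: th_gt0|exact: tau_gt0].
apply: divr_ge0 => //; apply: mulr_ge0; [exact: ltW | exact: sqr_ge0].
Qed.

Lemma partial_bound (H : 'rV[R]_d -> R) (k : R) M : 0 <= k ->
  (forall z, H (yof L G x0 z) <= k * Psi z) ->
  \sum_(0 <= m < M) p * q ^+ m * Ex L G x0 m H x0 <= k * (p * (al / 2 * R0 ^+ 2) + Cp).
Proof.
move=> k0 hk; apply: (le_trans (@main_ind H k k0 hk M x0)).
apply: ler_wpM2l => //; apply: lerD; first by apply: ler_wpM2l; [exact: p_ge0 | exact: Vx0].
rewrite -[X in _ <= X]mulr1; apply: ler_wpM2l; first exact: Cp_ge0.
rewrite lerBlDr lerDl; exact: exprn_ge0 q_ge0.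
Qed.

Lemma series_le (u : nat -> R) (B : R) : (forall m, 0 <= u m) ->
  (forall M, \sum_(0 <= m < M) u m <= B) ->
  (\sum_(0 <= m <oo) (u m)%:E <= B%:E)%E.
Proof.
move=> u0 uB; apply: lime_le.
  by apply: is_cvg_nneseries => m _ _; rewrite lee_fin.
by apply: nearW => M; rewrite sumEFin lee_fin.
Qed.

Lemma sq_rel : n%:R = sq ^+ 2 - 1 :> R.
Proof. by rewrite sqr_sqrtr ?ler0n // -natr1 addrK. Qed.

Lemma B_eq : p * (al / 2 * R0 ^+ 2) + Cp = Bnum sq L R0.
Proof. by rewrite /Cp al_eq th_eq /p /p_n sq_rel. Qed.

Lemma claim_f : (expect_at_stop L G x0 (fun _ x => (favg F x - favg F xs)%R)
   <= (L * R0 ^+ 2 / (sq + 1))%:E)%E.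
Proof.
rewrite /expect_at_stop; apply: series_le => [m|M].
  rewrite (term_eq (fun x => favg F x - favg F xs)).
  apply: mulr_ge0; first by apply: mulr_ge0; [exact: p_ge0 | exact: exprn_ge0 q_ge0].
  by apply: Ex_ge0 => x; rewrite subr_ge0.
under eq_bigr do rewrite (term_eq (fun x => favg F x - favg F xs)).
apply: le_trans.
  apply: (@partial_bound (fun x => favg F x - favg F xs) tau M (ltW tau_gt0)).
  by move=> z; rewrite /Psi mulrA mulfV ?mul1r // gt_eqF // tau_gt0.
rewrite B_eq; apply: num_f; [exact: sq_gt1 | exact: ltW].
Qed.

Lemma claim_g : (expect_at_stop L G x0 (fun _ x => (enorm (fullgrad G x) ^+ 2)%R)
   <= (8 * L ^+ 2 * R0 ^+ 2 / (5 * (sq + 1)))%:E)%E.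
Proof.
rewrite /expect_at_stop; apply: series_le => [m|M].
  rewrite (term_eq (fun x => enorm (fullgrad G x) ^+ 2)).
  apply: mulr_ge0; first by apply: mulr_ge0; [exact: p_ge0 | exact: exprn_ge0 q_ge0].
  by apply: Ex_ge0 => x; exact: sqr_ge0.
under eq_bigr do rewrite (term_eq (fun x => enorm (fullgrad G x) ^+ 2)).
apply: le_trans.
  apply: (@partial_bound (fun x => enorm (fullgrad G x) ^+ 2) (2 * L * tau) M).
    by rewrite !mulr_ge0 // ltW // tau_gt0.
  move=> z; rewrite enorm_sq /Psi.
  have tz : tau != 0 by rewrite gt_eqF // tau_gt0.
  rewrite (_ : 2 * L * tau * (tau^-1 * _) = 2 * L * (f (yof L G x0 z) - f xs)); last by field.
  exact: grad_bound.
rewrite B_eq -mulrA; apply: num_g; [exact: sq_gt1 | exact: ltW].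
Qed.

Lemma cost_sum M : \sum_(0 <= m < M) p * q ^+ m * (oracle_cost n m)%:R =
  3 * n%:R - q ^+ M * (3 * n%:R + 2 * M%:R).
Proof.
elim: M => [|M IH]; first by rewrite big_nil expr0 mul1r mulr0 addr0 subrr.
rewrite big_nat_recr //= IH /oracle_cost natrD natrM -natr1 exprS /q /p /p_n.
move: ((1 - n%:R^-1) ^+ M) => r.
have := nz; move: (n%:R) => nn nnz.
by field.
Qed.

Lemma claim_c : (expect_at_stop L G x0 (fun m _ => ((oracle_cost n m)%:R)%R)
   <= ((3 * n)%:R)%:E)%E.
Proof.
have tm : forall m, @p_n R n * (1 - @p_n R n) ^+ m * (n%:R ^+ m.+1)^-1 *
    \sum_(s : {ffun 'I_m.+1 -> 'I_n}) ((oracle_cost n m)%:R : R) = p * q ^+ m * (oracle_cost n m)%:R.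
  move=> m; rewrite sumr_const card_ffun !card_ord -[X in _ * X = _]mulr_natr natrX.
  have nz2 : n%:R ^+ m.+1 != 0 :> R by rewrite expf_neq0 // nz.
  by rewrite /q /p; field.
rewrite /expect_at_stop; apply: series_le => [m|M].
  rewrite tm; apply: mulr_ge0 => //; apply: mulr_ge0; [exact: p_ge0 | exact: exprn_ge0 q_ge0].
under eq_bigr do rewrite tm.
rewrite cost_sum natrM gerBl // mulr_ge0 ?exprn_ge0 ?q_ge0 //.
Qed.

End Main.

Theorem theorem5 (R : realType) (d n : nat) (L R0 : R)
    (F : 'I_n -> 'rV[R]_d -> R) (G : 'I_n -> 'rV[R]_d -> 'rV[R]_d)
    (x0 xs : 'rV[R]_d) :
  (0 < n)%N -> 0 < L ->
  (forall i x, differentiable (F i) x) ->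
  (forall i x v, 'd (F i) x v = dotv (G i x) v) ->
  (forall i, convex_fun (F i)) ->
  (forall i x y, enorm (G i x - G i y) <= L * enorm (x - y)) ->
  (forall x, favg F xs <= favg F x) ->
  enorm (x0 - xs) <= R0 ->
  [/\ (expect_at_stop L G x0
         (fun _ x => (enorm (fullgrad G x) ^+ 2)%R)
       <= (8 * L ^+ 2 * R0 ^+ 2 / (5 * (Num.sqrt (n.+1)%:R + 1)))%:E)%E,
      (expect_at_stop L G x0
         (fun _ x => (favg F x - favg F xs)%R)
       <= (L * R0 ^+ 2 / (Num.sqrt (n.+1)%:R + 1))%:E)%E
    & (expect_at_stop L G x0 (fun m _ => ((oracle_cost n m)%:R)%R)
       <= (3 * n)%:R%:E)%E].
Proof.
move=> n0 L0 dF dG cF lG mF hR; split.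
- by apply: claim_g.
- by apply: claim_f.
- by apply: claim_c.
Qed.
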